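(* Let $p$ be an odd prime. If $M$ is a finite $A$-module (finite as a set), then $\Phi_nM=0$ for some $n$.
   Context: $A$ is the ring of degree zero stable operations in $p$-local complex $K$-theory. Fix $q$ primitive mod $p^2$, $\Psi^q\in A$ the Adams operation, $q_i=q^{(-1)^i\lfloor i/2\rfloor}$, $\Theta_n(X)=\prod_{i=1}^n(X-q_i)\in\mathbb{Z}_{(p)}[X]$, and $\Phi_n=\Theta_n(\Psi^q)\in A$. *)

(* Defs.v *)
From HB Require Import structures.
From mathcomp Require Import all_boot all_order all_algebra.
Set Implicit Arguments. Unset Strict Implicit. Unset Printing Implicit Defensive.
Import Order.TTheory GRing.Theory Num.Theory.
Local Open Scope ring_scope.

Definition zp_int (p : nat) (x : rat) : bool := ~~ (p %| `|denq x|)%N.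

Definition primitive_mod (m q : nat) : bool :=
  coprime q m &&
  [forall k : 'I_(totient m), (0 < k)%N ==> (q ^ k %% m != 1)%N].

(* q_i = q^((-1)^i * floor(i/2)) *)
Definition qi (q : nat) (i : nat) : rat :=
  if odd i then (q%:R : rat) ^- i./2 else (q%:R : rat) ^+ i./2.

Definition Theta (q n : nat) : {poly rat} :=
  \prod_(1 <= i < n.+1) ('X - (qi q i)%:P).

(* Model of A: A = lim_n Z_(p)[X]/(Theta_n(X)), with Psi^q |-> X.
   An element is a compatible family (f n)_n of Z_(p)-polynomials of degree
   < n, f n representing the image in Z_(p)[X]/(Theta_n). *)
Definition isA (p q : nat) (f : nat -> {poly rat}) : Prop :=
  forall n, all (zp_int p) (f n) /\ (size (f n) <= n)%N /\
            f n.+1 %% Theta q n = f n.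

Definition Aadd (f g : nat -> {poly rat}) : nat -> {poly rat} :=
  fun n => f n + g n.
Definition Amul (q : nat) (f g : nat -> {poly rat}) : nat -> {poly rat} :=
  fun n => (f n * g n) %% Theta q n.
(* image in A of a polynomial P in Psi^q, i.e. P(Psi^q) *)
Definition Aeval (q : nat) (P : {poly rat}) : nat -> {poly rat} :=
  fun n => P %% Theta q n.
Definition Aone (q : nat) := Aeval q 1.
Definition Psi (q : nat) := Aeval q 'X.
Definition Phi (q n : nat) := Aeval q (Theta q n).

Definition isAmodule (p q : nat) (M : zmodType)
  (act : (nat -> {poly rat}) -> M -> M) : Prop :=
  [/\ forall a, isA p q a -> forall m m', act a (m + m') = act a m + act a m',
      forall a b, isA p q a -> isA p q b -> forall m,
        act (Aadd a b) m = act a m + act b m,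
      forall a b, isA p q a -> isA p q b -> forall m,
        act (Amul q a b) m = act a (act b m)
    & forall m, act (Aone q) m = m].

(* Main.v *)
Require Import Defs.
From HB Require Import structures.
From mathcomp Require Import all_boot all_order all_algebra.
Import GRing.Theory.
Local Open Scope ring_scope.
From mathcomp Require fingroup cyclic.
From mathcomp Require Import ring zify.
From Stdlib Require Import FunctionalExtensionality.
Import Order.TTheory Num.Theory.

Lemma card_mul0 (M : finZmodType) (m : M) : m *+ #|M| = 0.
Proof.
have := @cyclic.expg_cardG _ (fingroup.setT_group _) m (in_setT m).
by rewrite cardsT FinRing.zmodXgE.
Qed.

Definition zc (p : nat) : {pred rat} := fun x => coprime `|denq x| p.

Lemma zc_frac (p : nat) (a : int) (b : nat) : coprime b p -> zc p (a%:~R / b%:R).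
Proof.
move=> cb.
have [->|b0] := eqVneq b 0%N.
  by rewrite invr0 mulr0 /zc /= coprime1n.
rewrite /zc /=.
set x := _ / _.
have hx : x * b%:R = a%:~R by rewrite /x mulfVK // pnatr_eq0.
have hi : (numq x * b%:Z = a * denq x)%R.
  apply: (@intr_inj rat). rewrite !rmorphM /= numqE -mulrA (mulrC _ b%:R).
  by rewrite mulrA hx.
have : (`|denq x| %| `|numq x| * b)%N.
  have -> : (`|numq x| * b = `|(numq x * b%:Z)%R|)%N by rewrite abszM.
  by rewrite hi abszM dvdn_mull.
rewrite Gauss_dvdr; last by rewrite coprime_sym coprime_num_den.
by move/coprime_dvdl; apply.
Qed.

Lemma ratE (x : rat) : x = (numq x)%:~R / (`|denq x|%N)%:R.
Proof.
have -> : (`|denq x|%N)%:R = (denq x)%:~R :> rat.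
  by rewrite -absz_denq.
by rewrite divq_num_den.
Qed.

Lemma denq_nat0 (x : rat) : (`|denq x|%N)%:R != 0 :> rat.
Proof. by rewrite pnatr_eq0 absz_eq0 denq_eq0. Qed.

Lemma zc_subring p : subring_closed (zc p).
Proof.
split.
- by rewrite unfold_in /zc /= coprime1n.
- move=> x y hx hy.
  rewrite (ratE x) (ratE y).
  have -> : (numq x)%:~R / (`|denq x|%N)%:R - (numq y)%:~R / (`|denq y|%N)%:R
     = ((numq x * `|denq y|%N - numq y * `|denq x|%N)%R)%:~R / ((`|denq x| * `|denq y|)%N)%:R :> rat.
    rewrite natrM rmorphB !rmorphM /= !pmulrn -!pmulrn.
    have := denq_nat0 x; have := denq_nat0 y => h1 h2.
    field; by apply/andP.
  by apply: zc_frac; rewrite coprimeMl; apply/andP.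
- move=> x y hx hy.
  rewrite (ratE x) (ratE y).
  have -> : (numq x)%:~R / (`|denq x|%N)%:R * ((numq y)%:~R / (`|denq y|%N)%:R)
     = ((numq x * numq y)%R)%:~R / ((`|denq x| * `|denq y|)%N)%:R :> rat.
    rewrite natrM !rmorphM /=.
    by rewrite mulrACA invfM.
  by apply: zc_frac; rewrite coprimeMl; apply/andP.
Qed.

HB.instance Definition _ (p : nat) := GRing.isSubringClosed.Build rat (zc p) (zc_subring p).

Lemma modp_over (S : subringClosed rat) (d P : {poly rat}) :
  d \is monic -> d \is a polyOver S -> P \is a polyOver S -> P %% d \is a polyOver S.
Proof.
move=> md dS.
have d0 : d != 0 by apply: monic_neq0.
have sd : (0 < size d)%N by rewrite size_poly_gt0.
move: {2}(size P) (leqnn (size P)) => n; elim: n P => [|n IH] P hs PS.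
  by move: hs; rewrite leqn0 size_poly_eq0 => /eqP ->; rewrite mod0p rpred0.
have [hn|hn] := leqP (size P) n; first exact: IH.
have sP : size P = n.+1 by apply/eqP; rewrite eqn_leq hs hn.
have [lt|ge] := ltnP (size P) (size d); first by rewrite modp_small.
set k := (size P - size d)%N.
set Q := P - lead_coef P *: ('X^k * d).
have QS : Q \is a polyOver S.
  rewrite rpredB // polyOverZ ?rpredM ?polyOverXn //.
  by rewrite /lead_coef; move/polyOverP: PS; apply.
have hQ : Q %% d = P %% d.
  by rewrite /Q modpD modpN modpZl modp_mull scaler0 subr0.
rewrite -hQ; apply: IH => //.
apply/leq_sizeP => j hj.
rewrite /Q coefB coefZ coefXnM.
have [jn|jn] := eqVneq j n.
  subst j.
  have -> : (n < k)%N = false by apply/negbTE; rewrite -leqNgt /k; lia.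
  have -> : (n - k = (size d).-1)%N by rewrite /k; lia.
  move/monicP: md; rewrite /lead_coef => ->.
  by rewrite mulr1 /lead_coef sP subrr.
have jn1 : (n.+1 <= j)%N by lia.
rewrite nth_default ?sP //.
case: ifP => _; first by rewrite mulr0 subr0.
rewrite nth_default ?mulr0 ?subr0 //.
rewrite /k sP; move: ge jn1; rewrite sP; move: (size d) => a; lia.
Qed.

Section Th.
Variables p q : nat.
Hypothesis hqp : coprime q p.

Lemma qi_zc i : qi q i \in zc p.
Proof.
have hq : (q%:R : rat)^-1 \in zc p.
  have := @zc_frac p 1 q hqp; rewrite mul1r.
  by rewrite unfold_in.
rewrite /qi; case: ifP => _.
  by rewrite -exprVn rpredX.
by rewrite rpredX ?rpred_nat.
Qed.

Lemma T_over n : Theta q n \is a polyOver (zc p).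
Proof.
by rewrite /Theta rpred_prod // => i _; rewrite polyOverXsubC qi_zc.
Qed.

End Th.
Section Th2.
Variable q : nat.
Lemma T_monic n : Theta q n \is monic.
Proof. exact: monic_prod_XsubC. Qed.

Lemma size_T n : size (Theta q n) = n.+1.
Proof.
rewrite /Theta -(big_map (qi q) xpredT (fun x => 'X - x%:P)) size_prod_XsubC.
by rewrite size_map size_iota subn1.
Qed.

Lemma T_neq0 n : Theta q n != 0.
Proof. by rewrite -size_poly_eq0 size_T. Qed.

Lemma T_split a b : Theta q (a + b) =
  Theta q a * \prod_(1 <= i < b.+1) ('X - (qi q (i + a))%:P).
Proof.
rewrite /Theta (big_cat_nat _ (n:=a.+1)) //=; last by rewrite ltnS leq_addr.
congr (_ * _).
rewrite -{1}(add1n a) big_addn.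
by congr (\big[_/_]_(_ <= i < _) _); lia.
Qed.

Lemma T_dvd n m : (n <= m)%N -> Theta q n %| Theta q m.
Proof.
move=> h; rewrite -(subnKC h) T_split; exact: dvdp_mulr.
Qed.

Lemma T0 : Theta q 0 = 1.
Proof. by rewrite /Theta big_geq. Qed.

End Th2.

Lemma modp_mod_dvd (d e x : {poly rat}) : d %| e -> (x %% e) %% d = x %% d.
Proof.
move=> h; rewrite {2}(divp_eq x e) modpD (modp_eq0 (dvdp_mull _ h)) add0r //.
Qed.

Lemma modp_congr (d x y : {poly rat}) : d %| x - y -> x %% d = y %% d.
Proof.
by move=> h; rewrite -(subrK y x) modpD (modp_eq0 h) add0r.
Qed.

Definition Afam q (G : nat -> {poly rat}) : nat -> {poly rat} :=
  fun n => G n %% Theta q n.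
Definition good p q (G : nat -> {poly rat}) :=
  (forall n, G n \is a polyOver (zc p)) /\ (forall n, Theta q n %| G n.+1 - G n).

Section Fam.
Variables p q : nat.
Hypothesis hp : prime p.
Hypothesis hqp : coprime q p.

Lemma zc_zp x : (x \in zc p) = zp_int p x.
Proof. by rewrite unfold_in /zc /zp_int /= coprime_sym prime_coprime. Qed.

Lemma isA_Afam G : good p q G -> isA p q (Afam q G).
Proof.
move=> [GS Gd] n; split; [|split].
- have : G n %% Theta q n \is a polyOver (zc p).
    by apply: modp_over; [apply: T_monic | apply: T_over | apply: GS].
  by move/polyOverP=> h; apply/(all_nthP 0) => i _; rewrite -zc_zp h.
- by rewrite -ltnS -(size_T q n) ltn_modp T_neq0.
- rewrite /Afam modp_mod_dvd. apply: modp_congr. apply: Gd. exact: T_dvd.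
Qed.

Lemma Afam_id a : isA p q a -> Afam q a = a.
Proof.
move=> ha; apply: functional_extensionality => n; rewrite /Afam modp_small //.
by rewrite size_T ltnS; case: (ha n) => _ [].
Qed.

Lemma good_isA a : isA p q a -> good p q a.
Proof.
move=> ha; split => n.
- case: (ha n) => /allP h _; apply/polyOverP => i.
  have [lt|ge] := ltnP i (size (a n)); first by rewrite zc_zp h // mem_nth.
  by rewrite nth_default // rpred0.
- case: (ha n) => _ [_ h0].
  have h := divp_eq (a n.+1) (Theta q n); rewrite h0 in h.
  by rewrite {1}h addrK dvdp_mull.
Qed.

Lemma Afam_eq G G' : (forall n, Theta q n %| G n - G' n) -> Afam q G = Afam q G'.
Proof. by move=> h; apply: functional_extensionality => n; apply: modp_congr. Qed.

Lemma Aadd_Afam G G' : Aadd (Afam q G) (Afam q G') = Afam q (fun n => G n + G' n).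
Proof. by apply: functional_extensionality => n; rewrite /Aadd /Afam modpD. Qed.

Lemma Amul_Afam G G' : Amul q (Afam q G) (Afam q G') = Afam q (fun n => G n * G' n).
Proof.
apply: functional_extensionality => n; rewrite /Amul /Afam.
by rewrite modp_mul mulrC modp_mul mulrC.
Qed.

Lemma good_add G G' : good p q G -> good p q G' -> good p q (fun n => G n + G' n).
Proof.
move=> [h1 h2] [h3 h4]; split => n; first by rewrite rpredD.
have -> : G n.+1 + G' n.+1 - (G n + G' n) = (G n.+1 - G n) + (G' n.+1 - G' n) by ring.
by rewrite dvdp_add.
Qed.

Lemma good_mul G G' : good p q G -> good p q G' -> good p q (fun n => G n * G' n).
Proof.
move=> [h1 h2] [h3 h4]; split => n; first by rewrite rpredM.
have -> : G n.+1 * G' n.+1 - G n * G' n =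
   (G n.+1 - G n) * G' n.+1 + G n * (G' n.+1 - G' n) by ring.
by apply: dvdp_add; [apply: dvdp_mulr | apply: dvdp_mull].
Qed.

Lemma good_const P : P \is a polyOver (zc p) -> good p q (fun _ => P).
Proof. by move=> h; split => // n; rewrite subrr dvdp0. Qed.

Lemma good_scale (c : rat) G : c \in zc p -> good p q G -> good p q (fun n => c *: G n).
Proof.
move=> hc [h1 h2]; split => n; first by rewrite polyOverZ.
rewrite -scalerBr; have [->|c0] := eqVneq c 0; first by rewrite scale0r dvdp0.
by rewrite dvdpZr.
Qed.

End Fam.

Section Num.
Variables (p q K : nat).
Hypothesis hp : prime p.
Hypothesis hqp : coprime q p.
Hypothesis hK : (0 < K)%N.

Lemma q_gt0 : (0 < q)%N.
Proof.
case: q hqp => // /=; rewrite /coprime gcd0n => /eqP p1.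
by move: hp; rewrite p1.
Qed.

Lemma key_num : exists2 L, (0 < L)%N &
  forall w, (((q ^ (L * w))%N%:R - 1) / K%:R : rat) \in zc p.
Proof.
have [r cr hKr] := pfactor_coprime hp hK.
set e := logn p K in hKr.
exists (totient (p ^ e)); first by rewrite totient_gt0 expn_gt0 prime_gt0.
move=> w.
have cq : coprime q (p ^ e) by rewrite coprimeXr.
have hE := cyclic.Euler_exp_totient cq.
have h1 : (1 <= q ^ (totient (p ^ e) * w))%N by rewrite expn_gt0 q_gt0.
have : (p ^ e %| q ^ (totient (p ^ e) * w) - 1)%N.
  rewrite -eqn_mod_dvd // expnM -modnXm hE modnXm exp1n //.
move/divnK; set t := (_ %/ _)%N => ht.
have -> : (((q ^ (totient (p ^ e) * w))%N%:R - 1) : rat) = (q ^ (totient (p ^ e) * w) - 1)%N%:R.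
  by rewrite natrB.
rewrite -ht hKr !natrM.
have pe0 : ((p ^ e)%N%:R : rat) != 0 by rewrite pnatr_eq0 -lt0n expn_gt0 prime_gt0.
have r0 : (r%:R : rat) != 0.
  rewrite pnatr_eq0; apply: contraTneq cr => ->.
  by rewrite /coprime gcdn0; apply/negP => /eqP p1; move: hp; rewrite p1.
have -> : (t%:R * (p ^ e)%N%:R / (r%:R * (p ^ e)%N%:R) : rat) = (t%:Z)%:~R / r%:R.
  by rewrite -pmulrn; field; apply/andP.
by rewrite unfold_in; apply: zc_frac; rewrite coprime_sym.
Qed.

End Num.

Section Cong.
Variables (p q K L : nat).
Hypothesis hp : prime p.
Hypothesis hqp : coprime q p.
Hypothesis hK : (0 < K)%N.
Hypothesis hL : forall w, (((q ^ (L * w))%N%:R - 1) / K%:R : rat) \in zc p.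

Lemma qinv_zc : (q%:R : rat)^-1 \in zc p.
Proof. by have := @zc_frac p 1 q hqp; rewrite mul1r unfold_in. Qed.

Lemma qi_cong i w : (qi q (i + 2 * L * w) - qi q i) / K%:R \in zc p.
Proof.
have hodd : odd (i + 2 * L * w) = odd i.
  by rewrite oddD -mulnA mul2n odd_double addbF.
have hhalf : (i + 2 * L * w)./2 = (i./2 + L * w)%N.
  by rewrite -mulnA mul2n halfD odd_double andbF add0n doubleK.
have x0 : (q%:R : rat) != 0 by rewrite pnatr_eq0 -lt0n (@q_gt0 p q hp hqp).
have hz := hL w; rewrite natrX in hz.
rewrite /qi hodd hhalf; case: (odd i).
  have -> : (q%:R : rat) ^- (i./2 + L * w) - q%:R ^- i./2 =
     - (q%:R ^- (i./2 + L * w)) * (q%:R ^+ (L * w) - 1).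
    rewrite exprD invfM.
    have : (q%:R : rat) ^+ (L * w) != 0 by rewrite expf_neq0.
    have : (q%:R : rat) ^+ (i./2) != 0 by rewrite expf_neq0.
    move=> h1 h2; field; by apply/andP.
  by rewrite -mulrA rpredM ?rpredN // -exprVn rpredX // qinv_zc.
have -> : (q%:R : rat) ^+ (i./2 + L * w) - q%:R ^+ i./2 =
     (q%:R ^+ (i./2)) * (q%:R ^+ (L * w) - 1).
  by rewrite exprD; ring.
by rewrite -mulrA rpredM // rpredX // rpred_nat.
Qed.

Lemma poly_cong c w : (K%:R : rat)^-1 *:
  (\prod_(1 <= i < c.+1) ('X - (qi q (i + 2 * L * w))%:P) - Theta q c)
  \is a polyOver (zc p).
Proof.
rewrite /Theta; elim: c => [|c IH].
  by rewrite !big_geq // subrr scaler0 rpred0.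
rewrite big_nat_recr // [X in _ - X]big_nat_recr //=.
set A := \prod_(1 <= i < c.+1) _ in IH *.
set B := \prod_(1 <= i < c.+1) _ in IH *.
set a := qi q (c.+1 + 2 * L * w); set b := qi q c.+1.
have -> : (K%:R : rat)^-1 *: (A * ('X - a%:P) - B * ('X - b%:P)) =
  ((K%:R)^-1 *: (A - B)) * ('X - a%:P) + B * (((b - a) / K%:R)%:P).
  rewrite -!mul_polyC polyCM polyCB; ring.
rewrite rpredD // rpredM //.
- by rewrite polyOverXsubC /a qi_zc.
- by rewrite rpred_prod // => i _; rewrite polyOverXsubC qi_zc.
- rewrite polyOverC -opprB mulNr rpredN /a /b; exact: qi_cong.
Qed.

End Cong.

Lemma iter_idem (T : finType) (f : T -> T) :
  exists2 k, (0 < k)%N & forall x, iter (k + k) f x = iter k f x.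
Proof.
pose g := fun i : 'I_(#|{ffun T -> T}|.+1) => [ffun x => iter i f x].
have : ~~ injectiveb g.
  apply/negP => /injectiveP inj.
  by have := leq_card g inj; rewrite card_ord ltnn.
case/injectivePn => i [j ij eq].
have [a [d [d0 hd]]] : exists a d, (0 < d)%N /\ forall y, iter (a + d) f y = iter a f y.
  have : forall y, iter i f y = iter j f y.
    by move=> y; have := congr1 (fun h : {ffun T -> T} => h y) eq; rewrite /g !ffunE.
  case: (ltngtP i j) => [lt|gt|e]; last by move/eqP: ij; rewrite (val_inj e).
  - move=> h; exists i, (j - i)%N; split; first lia.
    by move=> y; have -> : (i + (j - i) = j)%N by lia.
  - move=> h; exists j, (i - j)%N; split; first lia.
    by move=> y; have -> : (j + (i - j) = i)%N by lia.
have hm : forall x m y, (a <= x)%N -> iter (x + d * m) f y = iter x f y.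
  move=> x m y ax; rewrite -(subnK ax) -addnA iterD [in RHS]iterD; congr iter.
  elim: m => [|m IH]; first by rewrite muln0 addn0.
  have -> : (a + d * m.+1 = d * m + (a + d))%N by rewrite mulnS; lia.
  by rewrite iterD hd -iterD addnC.
exists (d * a.+1)%N; first by rewrite muln_gt0 d0.
move=> y; rewrite hm //; nia.
Qed.

Lemma tele (R : comRingType) (a : R) (F G : nat -> R) (K : nat) :
  F 0%N = 1 -> (forall j, a * F j = F j.+1 + G j *+ K) ->
  forall n, a * (\sum_(j < n.+1) F j) + 1 =
    \sum_(j < n.+1) F j + (\sum_(j < n.+1) G j) *+ K + F n.+1.
Proof.
move=> F0 h; elim=> [|n IH].
  rewrite !big_ord1 h F0; ring.
rewrite [\sum_(j < n.+2) F j]big_ord_recr [\sum_(j < n.+2) G j]big_ord_recr /= mulrDr.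
rewrite addrAC IH h mulrnDl; ring.
Qed.

Definition Pblk q L t j : {poly rat} :=
  \prod_(1 <= i < (2 * L * t).+1) ('X - (qi q (i + 2 * L * (t * j)))%:P).
Definition Hblk q K L t j : {poly rat} :=
  (K%:R : rat)^-1 *: (Theta q (2 * L * t) - Pblk q L t j).

Section Mod.
Variables (p q : nat) (M : finZmodType) (act : (nat -> {poly rat}) -> M -> M).
Hypothesis hp : prime p.
Hypothesis hqp : coprime q p.
Hypothesis hM : isAmodule p q act.

Lemma act_add G G' m : good p q G -> good p q G' ->
  act (Afam q (fun n => G n + G' n)) m = act (Afam q G) m + act (Afam q G') m.
Proof.
move=> hG hG'; case: hM => _ h2 _ _; rewrite -Aadd_Afam.
by apply: h2; apply: (isA_Afam p q hp hqp).
Qed.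

Lemma act_mul G G' m : good p q G -> good p q G' ->
  act (Afam q (fun n => G n * G' n)) m = act (Afam q G) (act (Afam q G') m).
Proof.
move=> hG hG'; case: hM => _ _ h3 _; rewrite -Amul_Afam.
by apply: h3; apply: (isA_Afam p q hp hqp).
Qed.

Lemma act_one m : act (Afam q (fun _ => 1)) m = m.
Proof. by case: hM => _ _ _ h4; apply: h4. Qed.

Lemma act_zero m : act (Afam q (fun _ => 0)) m = 0.
Proof.
have g0 : good p q (fun _ => 0) by apply: good_const; rewrite rpred0.
have := act_add _ _ m g0 g0.
have -> : (fun _ : nat => (0 : {poly rat}) + 0) = (fun _ => 0).
  by apply: functional_extensionality => n; rewrite addr0.
by move=> h; apply: (addrI (act (Afam q (fun _ => 0)) m)); rewrite addr0 -h.
Qed.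

Lemma good_natmul G k : good p q G -> good p q (fun n => G n *+ k).
Proof.
move=> hG; have := @good_scale p q k%:R G (rpred_nat _ k) hG.
have -> : (fun n => (k%:R : rat) *: G n) = (fun n => G n *+ k).
  by apply: functional_extensionality => n; rewrite scaler_nat.
by [].
Qed.

Lemma act_natmul G k m : good p q G ->
  act (Afam q (fun n => G n *+ k)) m = act (Afam q G) m *+ k.
Proof.
move=> hG; elim: k => [|k IH].
  have -> : (fun n => G n *+ 0) = (fun _ => 0).
    by apply: functional_extensionality => n; rewrite mulr0n.
  by rewrite act_zero.
have -> : (fun n => G n *+ k.+1) = (fun n => G n + G n *+ k).
  by apply: functional_extensionality => n; rewrite mulrS.
by rewrite act_add ?IH ?mulrS //; apply: good_natmul.
Qed.

Lemma act_Kmul G m : good p q G -> act (Afam q (fun n => G n *+ #|M|)) m = 0.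
Proof. by move=> hG; rewrite act_natmul // card_mul0. Qed.

Lemma main_mod : exists n : nat, forall m : M, act (Phi q n) m = 0.
Proof.
have K0 : (0 < #|M|)%N by apply/card_gt0P; exists 0.
have [L L0 hL] := @key_num p q #|M| hp hqp K0.
have K0r : (#|M|%:R : rat) != 0 by rewrite pnatr_eq0 -lt0n.
have HS t j : Hblk q #|M| L t j \is a polyOver (zc p).
  rewrite /Hblk -opprB scalerN rpredN; exact: (@poly_cong p q #|M| L hp hqp hL).
have blk t j : Theta q (2 * L * t) * Theta q (2 * L * t * j) =
   Theta q (2 * L * t * j.+1) + (Theta q (2 * L * t * j) * Hblk q #|M| L t j) *+ #|M|.
  have -> : (2 * L * t * j.+1 = 2 * L * t * j + 2 * L * t)%N by rewrite mulnS addnC.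
  rewrite T_split.
  have -> : \prod_(1 <= i < (2 * L * t).+1) ('X - (qi q (i + 2 * L * t * j))%:P)
     = Pblk q L t j by rewrite /Pblk mulnA.
  rewrite -mulrnAr -scaler_nat /Hblk scalerA mulfV // scale1r; ring.
have gT n : good p q (fun _ => Theta q n) by apply: good_const; exact: (@T_over p q hqp).
have opblk t j m : act (Phi q (2 * L * t)) (act (Phi q (2 * L * t * j)) m)
    = act (Phi q (2 * L * t * j.+1)) m.
  change (act (Afam q (fun _ => Theta q (2 * L * t)))
     (act (Afam q (fun _ => Theta q (2 * L * t * j))) m)
     = act (Afam q (fun _ => Theta q (2 * L * t * j.+1))) m).
  rewrite -act_mul // blk act_add //; last first.
    by apply: good_natmul; apply: good_const; apply: rpredM; [exact: (@T_over p q hqp)|exact: HS].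
  by rewrite act_Kmul ?addr0 //; apply: good_const; apply: rpredM; [exact: (@T_over p q hqp)|exact: HS].
have itr j m : act (Phi q (2 * L * 1 * j)) m = iter j (act (Phi q (2 * L * 1))) m.
  elim: j m => [|j IH] m.
    rewrite muln0 /=.
    change (act (Afam q (fun _ => Theta q 0)) m = m).
    by rewrite T0 act_one.
  by rewrite iterS -IH opblk.
have [k k0 hk] := @iter_idem M (act (Phi q (2 * L * 1))).
have vv m : act (Phi q (2 * L * k)) (act (Phi q (2 * L * k)) m)
    = act (Phi q (2 * L * k)) m.
  have e m' : act (Phi q (2 * L * k)) m' = iter k (act (Phi q (2 * L * 1))) m'.
    by rewrite -itr muln1.
  by rewrite !e -iterD hk.
pose S := fun n => \sum_(j < n.+1) Theta q (2 * L * k * j).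
pose D := fun n => \sum_(j < n.+1) (Theta q (2 * L * k * j) * Hblk q #|M| L k j).
have tl := @tele _ (Theta q (2 * L * k)) (fun j => Theta q (2 * L * k * j))
   (fun j => Theta q (2 * L * k * j) * Hblk q #|M| L k j) #|M|.
have tl' n : Theta q (2 * L * k) * S n + 1 = S n + D n *+ #|M| + Theta q (2 * L * k * n.+1).
  apply: tl; first by rewrite muln0 T0.
  by move=> j; apply: blk.
have gS : good p q S.
  split => n; first by apply: rpred_sum => j _; exact: (@T_over p q hqp).
  rewrite /S big_ord_recr /= addrAC subrr add0r; apply: T_dvd; nia.
have gD : good p q D.
  split => n; first by apply: rpred_sum => j _; apply: rpredM; [exact: (@T_over p q hqp)|exact: HS].
  rewrite /D big_ord_recr /= addrAC subrr add0r; apply: dvdp_mulr; apply: T_dvd; nia.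
have eA : Afam q (fun n => Theta q (2 * L * k) * S n + 1) =
          Afam q (fun n => S n + D n *+ #|M|).
  apply: Afam_eq => n; rewrite tl' [X in X - _]addrC addrK; apply: T_dvd; nia.
have hS m : act (Phi q (2 * L * k)) (act (Afam q S) m) + m = act (Afam q S) m.
  have e := congr1 (fun a => act a m) eA; simpl in e.
  have gM : good p q (fun n => Theta q (2 * L * k) * S n) by apply: good_mul.
  have g1 : good p q (fun _ => 1) by apply: good_const; rewrite rpred1.
  have gDK : good p q (fun n => D n *+ #|M|) by apply: good_natmul.
  rewrite (act_add _ _ _ gM g1) (act_add _ _ _ gS gDK) act_Kmul // addr0 act_one in e.
  by rewrite -(act_mul _ _ _ (gT _) gS).
exists (2 * L * k)%N => m.
have iA : isA p q (Phi q (2 * L * k)) by apply: (isA_Afam p q hp hqp); apply: gT.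
case: hM => h1 _ _ _.
have := congr1 (act (Phi q (2 * L * k))) (hS m).
rewrite h1 // vv => h.
by apply: (addrI (act (Phi q (2 * L * k)) (act (Afam q S) m))); rewrite addr0.
Qed.

End Mod.

Theorem proposition3p5 (p q : nat) (hp : prime p) (hodd : odd p)
  (hq : primitive_mod (p ^ 2) q)
  (M : finZmodType) (act : (nat -> {poly rat}) -> M -> M)
  (hM : isAmodule p q act) :
  exists n : nat, forall m : M, act (Phi q n) m = 0.
Proof.
have hqp : coprime q p.
  by case/andP: hq => h _; rewrite -(@coprime_pexpr 2).
exact: (@main_mod p q M act hp hqp hM).
Qed.
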